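(* The winding number is the unique invariant of a bounded open interval of $\widetilde{\mathbb{RP}}^1=\mathbb R$ under the action of $\widetilde{SL}(2,\mathbb R)$: for bounded open intervals $U,U'\subset\mathbb R$, there exists $\tilde A\in\widetilde{SL}(2,\mathbb R)$ with $\tilde A(U)=U'$ if and only if $W(U)=W(U')$.
   Context: Let $\pi:\mathbb R\to\mathbb{RP}^1$, $\pi(t)=[\cos t:\sin t]$, and $\bar\pi(t)=(\cos t,\sin t)\in S^1$. $SL(2,\mathbb R)$ acts on $S^1$ by $A\cdot v=Av/\|Av\|$. The universal cover $\widetilde{SL}(2,\mathbb R)$ is realized as the group of diffeomorphisms $\tilde A$ of $\mathbb R$ for which there exists $A\in SL(2,\mathbb R)$ with $\bar\pi\circ\tilde A=A\cdot\bar\pi$ (lifts of homographies of $\mathbb{RP}^1$). Winding number: for real numbers $a<b$, $W((a,b))=k$ if $b=a+k\pi$ with $k\in\mathbb N$, and $W((a,b))=k+\frac12$ if $a+k\pi<b<a+(k+1)\pi$ with $k\in\mathbb N=\{0,1,2,\dots\}$. *)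

(* Defs.v *)
From Stdlib Require Import Reals.
From Coquelicot Require Import Coquelicot.
Open Scope R_scope.

Definition smooth (f : R -> R) : Prop := forall (n : nat) (x : R), ex_derive_n f n x.

Definition diffeo (f : R -> R) : Prop :=
  exists g : R -> R, (forall x, g (f x) = x) /\ (forall y, f (g y) = y)
    /\ smooth f /\ smooth g.

Definition pibar (t : R) : R * R := (cos t, sin t).

Definition SL2_act (a b c d : R) (v : R * R) : R * R :=
  let u := a * fst v + b * snd v in
  let w := c * fst v + d * snd v in
  let n := sqrt (u * u + w * w) in (u / n, w / n).

(* Elements of the universal cover ~SL(2,R), realized as diffeomorphisms of R
   lifting the action of some A in SL(2,R). *)
Definition in_SL2tilde (f : R -> R) : Prop :=
  diffeo f /\
  exists a b c d : R, a * d - b * c = 1 /\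
    forall t : R, pibar (f t) = SL2_act a b c d (pibar t).

Definition W (a b : R) : R :=
  let x := (b - a) / PI in
  if Req_EM_T x (IZR (Int_part x)) then x else IZR (Int_part x) + / 2.

Definition oint (a b : R) (x : R) : Prop := a < x < b.

(* Main.v *)
Require Import Defs.
From Stdlib Require Import Reals.
From Coquelicot Require Import Coquelicot.
From Stdlib Require Import Lra Lia Psatz ZArith.
Open Scope R_scope.

Fixpoint Ck (n : nat) (f : R -> R) : Prop :=
  match n with
  | O => True
  | S n => exists f', (forall x, is_derive f x (f' x)) /\ Ck n f'
  end.

Lemma Ck_ext n f g : (forall x, f x = g x) -> Ck n f -> Ck n g.
Proof.
  destruct n as [|n]; simpl; auto.
  intros E [f' [H1 H2]]; exists f'; split; auto.
  intros x; apply is_derive_ext with f; auto.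
Qed.

Lemma Ck_S n f : Ck (S n) f -> Ck n f.
Proof.
  revert f; induction n as [|n IH]; simpl; auto.
  intros f [f' [H1 H2]]; exists f'; split; auto.
Qed.

Lemma Derive_n_S_ext f f' : (forall x, is_derive f x (f' x)) ->
  forall k x, Derive_n f (S k) x = Derive_n f' k x.
Proof.
  intros H k; induction k as [|k IH]; intros x; simpl.
  - apply is_derive_unique; auto.
  - apply Derive_ext; intros t. apply IH.
Qed.

Lemma Ck_smooth_aux : forall k f, Ck (S k) f -> forall x, ex_derive_n f (S k) x.
Proof.
  induction k as [|k IH]; intros f Hf x.
  - destruct Hf as [f' [H1 _]]; simpl. exists (f' x); auto.
  - pose proof Hf as [f' [H1 H2]].
    change (ex_derive (Derive_n f (S k)) x). apply ex_derive_ext with (Derive_n f' k).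
    { intros t. symmetry. apply (Derive_n_S_ext f f' H1 k t). }
    apply (IH f' H2 x).
Qed.

Lemma Ck_smooth f : (forall n, Ck n f) -> smooth f.
Proof.
  intros H n x; destruct n as [|n]; simpl; auto.
  apply Ck_smooth_aux; auto.
Qed.

Lemma Ck_const n c : Ck n (fun _ => c).
Proof.
  revert c; induction n; simpl; auto. intros c.
  exists (fun _ => 0); split; auto. intros x; exact (is_derive_const (K:=R_AbsRing) (V:=R_NormedModule) c x).
Qed.

Lemma Ck_id n : Ck n (fun x => x).
Proof.
  destruct n; simpl; auto. exists (fun _ => 1); split; [|apply Ck_const].
  intros x; exact (is_derive_id (K:=R_AbsRing) x).
Qed.

Lemma Ck_plus n f g : Ck n f -> Ck n g -> Ck n (fun x => f x + g x).
Proof.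
  revert f g; induction n as [|n IH]; simpl; auto.
  intros f g [f' [H1 H2]] [g' [H3 H4]].
  exists (fun x => f' x + g' x); split; auto.
  intros x; apply (is_derive_plus f g); auto.
Qed.

Lemma Ck_mult n f g : Ck n f -> Ck n g -> Ck n (fun x => f x * g x).
Proof.
  revert f g; induction n as [|n IH]; auto.
  intros f g Hf Hg.
  pose proof (Ck_S _ _ Hf) as Hf0. pose proof (Ck_S _ _ Hg) as Hg0.
  destruct Hf as [f' [H1 H2]]; destruct Hg as [g' [H3 H4]].
  exists (fun x => f' x * g x + f x * g' x); split.
  - intros x. apply (is_derive_mult f g); auto. intros; apply Rmult_comm.
  - apply Ck_plus; apply IH; auto.
Qed.

Lemma Ck_comp n F g : Ck n F -> Ck n g -> Ck n (fun x => F (g x)).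
Proof.
  revert F g; induction n as [|n IH]; auto.
  intros F g HF Hg.
  pose proof (Ck_S _ _ Hg) as Hg0.
  destruct HF as [F' [H1 H2]]; destruct Hg as [g' [H3 H4]].
  exists (fun x => g' x * F' (g x)); split.
  - intros x. apply (is_derive_comp F g); auto.
  - apply Ck_mult; auto.
Qed.

Lemma Ck_inv n g : (forall x, g x <> 0) -> Ck n g -> Ck n (fun x => / g x).
Proof.
  intros Hz; revert g Hz; induction n as [|n IH]; auto.
  intros g Hz Hg.
  pose proof (Ck_S _ _ Hg) as Hg0.
  destruct Hg as [g' [H3 H4]].
  exists (fun x => (-1) * g' x * (/ g x * / g x)); split.
  - intros x. apply is_derive_ext with (fun y => / g y); auto.
    replace ((-1) * g' x * (/ g x * / g x)) with (- g' x / g x ^ 2).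
    + apply is_derive_inv; auto.
    + field. auto.
  - apply Ck_mult; [apply Ck_mult; [apply Ck_const|auto]|].
    apply Ck_mult; apply IH; auto.
Qed.

Lemma Ck_sin_cos n : Ck n sin /\ Ck n cos.
Proof.
  induction n as [|n [IH1 IH2]]; simpl; auto.
  split.
  - exists cos; split; auto. intros x; apply is_derive_sin.
  - exists (fun x => (-1) * sin x); split.
    + intros x. replace ((-1) * sin x) with (- sin x) by ring. apply is_derive_cos.
    + apply Ck_mult; auto. apply Ck_const.
Qed.

Lemma Ck_atan n : Ck n atan.
Proof.
  destruct n as [|n]; simpl; auto.
  exists (fun x => / (1 + x * x)); split.
  - intros x. replace (x * x) with (x²) by (unfold Rsqr; ring). apply is_derive_atan.
  - apply Ck_inv.
    + intros x. nra.
    + apply Ck_plus; [apply Ck_const|]. apply Ck_mult; apply Ck_id.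
Qed.

Definition hN mu t := (1 - mu) * sin t * cos t.
Definition hD mu t := mu * cos t * cos t + sin t * sin t.
Definition h mu t := t + atan (hN mu t / hD mu t).

Lemma sc1 t : sin t * sin t + cos t * cos t = 1.
Proof. pose proof (sin2_cos2 t). unfold Rsqr in H. lra. Qed.

Lemma hD_pos mu t : 0 < mu -> 0 < hD mu t.
Proof.
  intros Hm; unfold hD. pose proof (sc1 t).
  destruct (Rle_lt_dec mu 1).
  - assert (mu * (sin t * sin t + cos t * cos t) <= mu * cos t * cos t + sin t * sin t).
    { assert (0 <= (1 - mu) * (sin t * sin t)) by (apply Rmult_le_pos; nra). nra. }
    nra.
  - nra.
Qed.

Lemma h_smooth mu n : 0 < mu -> Ck n (h mu).
Proof.
  intros Hm. unfold h.
  apply (Ck_plus n (fun t => t) (fun t => atan (hN mu t / hD mu t))); [apply Ck_id|].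
  apply (Ck_comp n atan (fun t => hN mu t / hD mu t)); [apply Ck_atan|].
  apply (Ck_mult n (hN mu) (fun t => / hD mu t)).
  - unfold hN. apply (Ck_mult n (fun t => (1 - mu) * sin t) cos).
    + apply (Ck_mult n (fun _ => 1 - mu) sin); [apply Ck_const|apply Ck_sin_cos].
    + apply Ck_sin_cos.
  - apply (Ck_inv n (hD mu)). { intros x; pose proof (hD_pos mu x Hm); lra. }
    unfold hD. apply (Ck_plus n (fun t => mu * cos t * cos t) (fun t => sin t * sin t)).
    + apply (Ck_mult n (fun t => mu * cos t) cos); [|apply Ck_sin_cos].
      apply (Ck_mult n (fun _ => mu) cos); [apply Ck_const|apply Ck_sin_cos].
    + apply (Ck_mult n sin sin); apply Ck_sin_cos.
Qed.

Lemma h_lift mu t : 0 < mu -> exists r, 0 < r /\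
  cos (h mu t) = r * (mu * cos t) /\ sin (h mu t) = r * sin t.
Proof.
  intros Hm. pose proof (hD_pos mu t Hm) as HD. pose proof (sc1 t) as S1.
  set (Q := hN mu t / hD mu t).
  assert (Hs : 0 < sqrt (1 + Q²)) by (apply sqrt_lt_R0; unfold Rsqr; nra).
  exists (/ (hD mu t * sqrt (1 + Q²))). split.
  { apply Rinv_0_lt_compat. nra. }
  assert (E1 : cos t * hD mu t - sin t * hN mu t = mu * cos t).
  { unfold hD, hN. transitivity (mu * cos t * (sin t * sin t + cos t * cos t)); [ring|rewrite S1; ring]. }
  assert (E2 : sin t * hD mu t + cos t * hN mu t = sin t).
  { unfold hD, hN. transitivity (sin t * (sin t * sin t + cos t * cos t)); [ring|rewrite S1; ring]. }
  unfold h. fold Q. rewrite cos_plus, sin_plus, cos_atan, sin_atan.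
  assert (EQ : Q * hD mu t = hN mu t) by (unfold Q; field; lra).
  clearbody Q. rewrite <- EQ in E1, E2.
  split.
  - transitivity ((cos t * hD mu t - sin t * (Q * hD mu t)) / (hD mu t * sqrt (1 + Q²))).
    + field. lra.
    + rewrite E1. field. lra.
  - transitivity ((sin t * hD mu t + cos t * (Q * hD mu t)) / (hD mu t * sqrt (1 + Q²))).
    + field. lra.
    + rewrite E2. field. lra.
Qed.

Lemma h_bound mu t : - (PI/2) < h mu t - t < PI / 2.
Proof. unfold h. pose proof (atan_bound (hN mu t / hD mu t)). lra. Qed.

Lemma h_odd mu t : h mu (- t) = - h mu t.
Proof.
  unfold h, hN, hD. rewrite sin_neg, cos_neg.
  replace ((1 - mu) * - sin t * cos t / (mu * cos t * cos t + - sin t * - sin t))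
    with (- ((1 - mu) * sin t * cos t / (mu * cos t * cos t + sin t * sin t))).
  - rewrite atan_opp. ring.
  - unfold Rdiv. replace (- sin t * - sin t) with (sin t * sin t) by ring. ring.
Qed.

Lemma sin0 z : sin z = 0 -> - PI < z < PI -> z = 0.
Proof.
  intros H B. destruct (sin_eq_0_0 z H) as [k Hk]. subst z.
  assert (PI > 0) by apply PI_RGT_0.
  assert (-1 < IZR k < 1).
  { split; [apply (Rmult_lt_reg_r PI)|apply (Rmult_lt_reg_r PI)]; lra. }
  destruct H1 as [H1 H2]. apply lt_IZR in H1. apply lt_IZR in H2.
  assert (k = 0%Z) by lia. subst. simpl. ring.
Qed.

Lemma h_inv mu nu t : 0 < mu -> 0 < nu -> mu * nu = 1 -> h nu (h mu t) = t.
Proof.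
  intros Hm Hn E.
  destruct (h_lift mu t Hm) as [r [Hr [C1 S1]]].
  destruct (h_lift nu (h mu t) Hn) as [r' [Hr' [C2 S2]]].
  apply Rminus_diag_uniq. apply sin0.
  - rewrite sin_minus, C2, S2, C1, S1.
    transitivity (r' * r * sin t * cos t * (1 - mu * nu)); [ring|].
    rewrite E; ring.
  - pose proof (h_bound mu t). pose proof (h_bound nu (h mu t)). lra.
Qed.

Lemma h_hit s s' : cos s <> 0 -> sin s' <> 0 ->
  0 < sin s * cos s' / (cos s * sin s') -> - (PI/2) < s - s' < PI/2 ->
  h (sin s * cos s' / (cos s * sin s')) s = s'.
Proof.
  intros Hc Hs Hm B. set (mu := sin s * cos s' / (cos s * sin s')) in *.
  destruct (h_lift mu s Hm) as [r [Hr [C1 S1]]].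
  apply Rminus_diag_uniq. apply sin0.
  - rewrite sin_minus, C1, S1. unfold mu. field. auto.
  - pose proof (h_bound mu s). lra.
Qed.

Definition F c1 c2 mu t := c2 + h mu (t + c1).

Lemma act_pos x u w rho : 0 < rho -> cos x = rho * u -> sin x = rho * w ->
  pibar x = ((u / sqrt (u * u + w * w)), (w / sqrt (u * u + w * w))).
Proof.
  intros Hr Hc Hs. pose proof (sc1 x) as S.
  rewrite Hc, Hs in S.
  assert (E : sqrt (u * u + w * w) = / rho).
  { assert (u * u + w * w = / rho * / rho).
    { apply (Rmult_eq_reg_l (rho * rho)); [|nra]. field_simplify; nra. }
    rewrite H. apply sqrt_square. left; apply Rinv_0_lt_compat; auto. }
  unfold pibar. rewrite E, Hc, Hs. f_equal; field; lra.
Qed.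

Lemma F_smooth c1 c2 mu : 0 < mu -> smooth (F c1 c2 mu).
Proof.
  intros Hm. apply Ck_smooth. intros n. unfold F.
  apply (Ck_plus n (fun _ => c2) (fun t => h mu (t + c1))); [apply Ck_const|].
  apply (Ck_comp n (h mu) (fun t => t + c1)); [apply h_smooth; auto|].
  apply (Ck_plus n (fun t => t) (fun _ => c1)); [apply Ck_id|apply Ck_const].
Qed.

Lemma F_SL c1 c2 mu : 0 < mu -> in_SL2tilde (F c1 c2 mu).
Proof.
  intros Hm. split.
  - exists (fun y => - c1 + h (/ mu) (y - c2)). split; [|split; [|split]].
    + intros x. unfold F. replace (c2 + h mu (x + c1) - c2) with (h mu (x + c1)) by ring.
      rewrite h_inv; [ring|auto|apply Rinv_0_lt_compat; auto|field; lra].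
    + intros y. unfold F. replace (- c1 + h (/ mu) (y - c2) + c1) with (h (/ mu) (y - c2)) by ring.
      rewrite h_inv; [ring|apply Rinv_0_lt_compat; auto|auto|field; lra].
    + apply F_smooth; auto.
    + apply Ck_smooth. intros n.
      apply (Ck_plus n (fun _ => - c1) (fun y => h (/ mu) (y - c2))); [apply Ck_const|].
      apply (Ck_comp n (h (/ mu)) (fun y => y - c2)); [apply h_smooth; apply Rinv_0_lt_compat; auto|].
      apply (Ck_plus n (fun t => t) (fun _ => - c2)); [apply Ck_id|apply Ck_const].
  - set (C1 := cos c1); set (S1 := sin c1); set (C2 := cos c2); set (S2 := sin c2).
    set (q := sqrt mu).
    assert (Hq : 0 < q) by (apply sqrt_lt_R0; auto).
    assert (Hqq : q * q = mu) by (apply sqrt_sqrt; lra).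
    exists ((C2 * mu * C1 - S2 * S1) / q), ((- C2 * mu * S1 - S2 * C1) / q),
           ((S2 * mu * C1 + C2 * S1) / q), ((- S2 * mu * S1 + C2 * C1) / q).
    split.
    + pose proof (sc1 c1). pose proof (sc1 c2). fold C1 S1 C2 S2 in H, H0.
      apply (Rmult_eq_reg_l (q * q)); [|nra].
      field_simplify; [|lra]. replace (q ^ 2) with mu by (rewrite <- Hqq; ring). transitivity (mu * ((S1*S1+C1*C1)*(S2*S2+C2*C2))); [ring|]. rewrite H, H0; ring.
    + intros t. destruct (h_lift mu (t + c1) Hm) as [r [Hr [Hc Hs]]].
      apply (act_pos _ _ _ (r * q)); [nra| |].
      * unfold F. rewrite cos_plus, Hc, Hs, cos_plus, sin_plus. unfold pibar; simpl.
        fold C1 S1 C2 S2. field. lra.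
      * unfold F. rewrite sin_plus, Hc, Hs, cos_plus, sin_plus. unfold pibar; simpl.
        fold C1 S1 C2 S2. field. lra.
Qed.

Lemma smooth_cont f : smooth f -> continuity f.
Proof.
  intros H x. apply continuity_pt_filterlim. apply (ex_derive_continuous (K:=R_AbsRing) (V:=R_NormedModule)).
  exact (H 1%nat x).
Qed.

Lemma IVTg f a b y : continuity f -> a <= b -> (f a - y) * (f b - y) <= 0 ->
  exists x, a <= x <= b /\ f x = y.
Proof.
  intros Hc Hab Hp.
  destruct (IVT_cor (fun x => f x - y) a b) as [z [Hz Ez]]; auto.
  - apply (continuity_minus f (fun _ => y)); auto. apply continuity_const. intros u v; auto.
  - exists z; split; auto. lra.
Qed.

Lemma cont_lin f p q : continuity f -> continuity (fun s => f (p + s * q)).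
Proof.
  intros Hc s. apply continuity_pt_filterlim.
  apply (continuous_comp (fun s => p + s * q) f).
  - apply (ex_derive_continuous (K:=R_AbsRing) (V:=R_NormedModule)). auto_derive. auto.
  - apply continuity_pt_filterlim. apply Hc.
Qed.

Lemma mono_aux f : continuity f -> (forall x y, f x = f y -> x = y) ->
  forall x0 y0 x y, x0 < y0 -> x < y -> f x0 < f y0 -> f x < f y.
Proof.
  intros Hc Hi x0 y0 x y H0 H1 H2.
  destruct (Rlt_le_dec (f x) (f y)) as [|Hle]; auto. exfalso.
  assert (f y <> f x) by (intro E; apply Hi in E; lra).
  assert (Hlt : f y < f x) by lra.
  assert (Hc2 : continuity (fun s => f (y0 + s * (y - y0)) - f (x0 + s * (x - x0)))).
  { apply (continuity_minus (fun s => f (y0 + s * (y - y0))) (fun s => f (x0 + s * (x - x0))));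
      apply cont_lin; auto. }
  destruct (IVT_cor _ 0 1 Hc2) as [z [Hz Ez]].
  - lra.
  - replace (y0 + 0 * (y - y0)) with y0 by ring. replace (x0 + 0 * (x - x0)) with x0 by ring.
    replace (y0 + 1 * (y - y0)) with y by ring. replace (x0 + 1 * (x - x0)) with x by ring.
    nra.
  - cbv beta in Ez. assert (E : y0 + z * (y - y0) = x0 + z * (x - x0)) by (apply Hi; lra).
    clear Hc2 Ez Hc Hi.
    assert (S : (1 - z) * (y0 - x0) + z * (y - x) = 0) by lra.
    destruct (Rle_lt_or_eq_dec z 1) as [Hz1|Hz1]; [lra| |].
    + assert (0 < (1 - z) * (y0 - x0)) by (apply Rmult_lt_0_compat; lra).
      assert (0 <= z * (y - x)) by (apply Rmult_le_pos; lra). lra.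
    + subst z. lra.
Qed.

Lemma mono f : continuity f -> (forall x y, f x = f y -> x = y) ->
  (forall x y, x < y -> f x < f y) \/ (forall x y, x < y -> f y < f x).
Proof.
  intros Hc Hi.
  destruct (Rlt_le_dec (f 0) (f 1)).
  - left. intros x y Hxy. apply (mono_aux f Hc Hi 0 1); auto; lra.
  - right. assert (f 1 <> f 0) by (intro E; apply Hi in E; lra).
    intros x y Hxy. cut (- f x < - f y); [lra|].
    apply (mono_aux (fun t => - f t)) with 0 1; auto; try lra.
    + apply (continuity_opp f); auto.
    + intros u v E. apply Hi. lra.
Qed.

Lemma img_inc f a b a' b' : continuity f -> (forall x y, x < y -> f x < f y) -> a < b -> a' < b' ->
  (forall y, (exists x, oint a b x /\ f x = y) <-> oint a' b' y) -> a' = f a /\ b' = f b.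
Proof.
  intros Hc Hm Hab Hab' H. unfold oint in H.
  assert (Hf : f a < f b) by auto.
  assert (I1 : forall y, f a < y < f b -> a' < y < b').
  { intros y Hy. apply H. destruct (IVTg f a b y Hc) as [x [Hx Ex]]; [lra|nra|].
    exists x. split; auto. split.
    - destruct (Rle_lt_or_eq_dec a x) as [|E]; [lra|auto|subst; lra].
    - destruct (Rle_lt_or_eq_dec x b) as [|E]; [lra|auto|subst; lra]. }
  assert (I2 : forall y, a' < y < b' -> f a < y < f b).
  { intros y Hy. apply H in Hy. destruct Hy as [x [Hx Ex]]. subst y.
    split; apply Hm; lra. }
  split.
  - destruct (Rtotal_order a' (f a)) as [L|[E|L]]; auto; exfalso.
    + set (y := (a' + Rmin (f a) b') / 2).
      assert (a' < y < b') by (unfold y; pose proof (Rmin_l (f a) b'); pose proof (Rmin_r (f a) b');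
        pose proof (Rmin_glb_lt (f a) b' a'); lra).
      apply I2 in H0. unfold y in H0. pose proof (Rmin_l (f a) b'). lra.
    + set (y := (f a + Rmin a' (f b)) / 2).
      assert (f a < y < f b) by (unfold y; pose proof (Rmin_l a' (f b)); pose proof (Rmin_r a' (f b));
        pose proof (Rmin_glb_lt a' (f b) (f a)); lra).
      apply I1 in H0. unfold y in H0. pose proof (Rmin_l a' (f b)). lra.
  - destruct (Rtotal_order b' (f b)) as [L|[E|L]]; auto; exfalso.
    + set (y := (Rmax b' (f a) + f b) / 2).
      assert (f a < y < f b) by (unfold y; pose proof (Rmax_l b' (f a)); pose proof (Rmax_r b' (f a));
        pose proof (Rmax_lub_lt b' (f a) (f b)); lra).
      apply I1 in H0. unfold y in H0. pose proof (Rmax_l b' (f a)). pose proof (Rmax_lub_lt b' (f a) (f b)). lra.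
    + set (y := (Rmax (f b) a' + b') / 2).
      assert (a' < y < b') by (unfold y; pose proof (Rmax_l (f b) a'); pose proof (Rmax_r (f b) a');
        pose proof (Rmax_lub_lt (f b) a' b'); lra).
      apply I2 in H0. unfold y in H0. pose proof (Rmax_l (f b) a'). pose proof (Rmax_lub_lt (f b) a' b'). lra.
Qed.

Definition Kp (f : R -> R) := forall x y, sin (f x - f y) = 0 <-> sin (x - y) = 0.

Lemma period f : continuity f -> (forall x y, x < y -> f x < f y) -> Kp f ->
  forall x, f (x + PI) = f x + PI.
Proof.
  intros Hc Hm HK x. pose proof PI_RGT_0 as HPI.
  assert (Hd : f x < f (x + PI)) by (apply Hm; lra).
  assert (Hs : sin (f (x + PI) - f x) = 0).
  { apply HK. replace (x + PI - x) with PI by ring. apply sin_PI. }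
  destruct (sin_eq_0_0 _ Hs) as [m Hmm].
  assert (0 < IZR m) by (apply (Rmult_lt_reg_r PI); lra).
  apply lt_0_IZR in H.
  destruct (Z.eq_dec m 1) as [E|NE].
  - subst m. simpl in Hmm. lra.
  - exfalso. assert (2 <= m)%Z by lia. apply IZR_le in H0.
    assert (2 * PI <= f (x + PI) - f x) by (rewrite Hmm; apply Rmult_le_compat_r; lra).
    destruct (IVTg f x (x + PI) (f x + PI) Hc) as [z [Hz Ez]]; [lra|nra|].
    assert (z <> x) by (intro; subst; lra).
    assert (z <> x + PI) by (intro; subst; lra).
    assert (sin (z - x) = 0).
    { apply HK. rewrite Ez. replace (f x + PI - f x) with PI by ring. apply sin_PI. }
    assert (0 < sin (z - x)) by (apply sin_gt_0; lra). lra.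
Qed.

Lemma period_n f : continuity f -> (forall x y, x < y -> f x < f y) -> Kp f ->
  forall n x, f (x + INR n * PI) = f x + INR n * PI.
Proof.
  intros Hc Hm HK n; induction n as [|n IH]; intros x.
  - simpl. replace (x + 0 * PI) with x by ring. ring.
  - rewrite S_INR. replace (x + (INR n + 1) * PI) with ((x + INR n * PI) + PI) by ring.
    rewrite (period f Hc Hm HK), IH. ring.
Qed.

Lemma W_len a b : W a b = W 0 (b - a).
Proof. unfold W. rewrite Rminus_0_r. reflexivity. Qed.

Lemma Int_part_nat L n : 0 < PI -> INR n * PI <= L < INR (S n) * PI -> Int_part (L / PI) = Z.of_nat n.
Proof.
  intros HPI [H1 H2]. symmetry. apply Int_part_spec. rewrite <- INR_IZR_INZ.
  rewrite S_INR in H2.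
  set (x := L / PI). assert (L = x * PI) by (unfold x; field; lra). clearbody x. subst L.
  split; nra.
Qed.

Lemma W_equal L L' n : INR n * PI <= L < INR (S n) * PI -> INR n * PI <= L' < INR (S n) * PI ->
  (L = INR n * PI <-> L' = INR n * PI) -> W 0 L = W 0 L'.
Proof.
  intros H1 H2 H3. pose proof PI_RGT_0 as HPI.
  unfold W. rewrite !Rminus_0_r.
  rewrite (Int_part_nat L n HPI H1), (Int_part_nat L' n HPI H2). rewrite <- INR_IZR_INZ.
  destruct (Req_EM_T (L / PI) (INR n)) as [E|E]; destruct (Req_EM_T (L' / PI) (INR n)) as [E'|E']; auto.
  - rewrite E, E'; auto.
  - exfalso. apply E'. assert (L = INR n * PI) by (rewrite <- E; field; lra).
    apply H3 in H. rewrite H. field. lra.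
  - exfalso. apply E. assert (L' = INR n * PI) by (rewrite <- E'; field; lra).
    apply H3 in H. rewrite H. field. lra.
Qed.

Lemma W_preserve f a b : continuity f -> (forall x y, x < y -> f x < f y) -> Kp f -> a < b ->
  W a b = W (f a) (f b).
Proof.
  intros Hc Hm HK Hab. pose proof PI_RGT_0 as HPI.
  rewrite (W_len a b), (W_len (f a) (f b)).
  set (k := Int_part ((b - a) / PI)).
  destruct (base_Int_part ((b - a) / PI)) as [B1 B2]. fold k in B1, B2.
  set (x := (b - a) / PI) in *. assert (Ex : b - a = x * PI) by (unfold x; field; lra).
  assert (0 < x) by (apply (Rmult_lt_reg_r PI); lra).
  assert (Hk : (0 <= k)%Z) by (assert (-1 < IZR k) by lra; apply lt_IZR in H0; lia).
  set (n := Z.to_nat k).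
  assert (En : INR n = IZR k) by (unfold n; rewrite INR_IZR_INZ, Z2Nat.id; auto).
  assert (L1 : INR n * PI <= b - a < INR (S n) * PI) by (rewrite S_INR, En; split; nra).
  assert (P0 := period_n f Hc Hm HK n a).
  assert (P1 := period_n f Hc Hm HK (S n) a).
  assert (M1 : f (a + INR n * PI) <= f b).
  { destruct (Rle_lt_or_eq_dec (a + INR n * PI) b) as [L|E]; [lra|left; apply Hm; auto|rewrite E; lra]. }
  assert (M2 : f b < f (a + INR (S n) * PI)) by (apply Hm; lra).
  apply (W_equal _ _ n L1); [lra|].
  split.
  - intros E. replace b with (a + INR n * PI) by lra. lra.
  - intros E. destruct (Rle_lt_or_eq_dec (a + INR n * PI) b) as [L|E2]; [lra| |lra].
    apply Hm in L. lra.
Qed.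

Lemma lift_K f a b c d : a * d - b * c = 1 ->
  (forall t, pibar (f t) = SL2_act a b c d (pibar t)) -> Kp f.
Proof.
  intros Hdet H.
  assert (G : forall t, exists n, 0 < n /\ cos (f t) = (a * cos t + b * sin t) / n /\
                                  sin (f t) = (c * cos t + d * sin t) / n).
  { intros t. specialize (H t). unfold SL2_act, pibar in H. simpl in H.
    injection H as H1 H2.
    set (u := a * cos t + b * sin t) in *. set (w := c * cos t + d * sin t) in *.
    exists (sqrt (u * u + w * w)). split; auto.
    apply sqrt_lt_R0. pose proof (sc1 t).
    assert (cos t = d * u - b * w) by (unfold u, w; transitivity (cos t * (a * d - b * c)); [rewrite Hdet; ring|ring]).
    assert (sin t = a * w - c * u) by (unfold u, w; transitivity (sin t * (a * d - b * c)); [rewrite Hdet; ring|ring]).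
    destruct (Req_dec u 0); destruct (Req_dec w 0); try nra. }
  intros x y.
  destruct (G x) as [nx [Hnx [Cx Sx]]]. destruct (G y) as [ny [Hny [Cy Sy]]].
  assert (E : sin (f x - f y) = sin (x - y) / (nx * ny)).
  { rewrite !sin_minus, Cx, Sx, Cy, Sy.
    transitivity ((a * d - b * c) * (sin x * cos y - cos x * sin y) / (nx * ny)).
    - field. lra.
    - rewrite Hdet. field. lra. }
  rewrite E. split; intros Z.
  - assert (nx * ny <> 0) by nra.
    apply (Rmult_eq_reg_r (/ (nx * ny))); [|apply Rinv_neq_0_compat; auto].
    unfold Rdiv in Z. lra.
  - rewrite Z. unfold Rdiv. ring.
Qed.

Lemma diffeo_inj f : diffeo f -> forall x y, f x = f y -> x = y.
Proof.
  intros [g [H1 _]] x y E. rewrite <- (H1 x), <- (H1 y), E. auto.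
Qed.

Lemma forward a b a' b' f : a < b -> a' < b' -> in_SL2tilde f ->
  (forall y, (exists x, oint a b x /\ f x = y) <-> oint a' b' y) -> W a b = W a' b'.
Proof.
  intros Hab Hab' [Hd [p [q [r [s [Hdet Hl]]]]]] Himg.
  assert (Hc : continuity f) by (destruct Hd as [g [_ [_ [Hs _]]]]; apply smooth_cont; auto).
  assert (Hi := diffeo_inj f Hd).
  assert (HK := lift_K f p q r s Hdet Hl).
  destruct (mono f Hc Hi) as [Hm|Hm].
  - destruct (img_inc f a b a' b' Hc Hm Hab Hab' Himg) as [E1 E2]. subst.
    apply W_preserve; auto.
  - set (g := fun t => - f t).
    assert (Hcg : continuity g) by (apply continuity_opp; auto).
    assert (Hmg : forall x y, x < y -> g x < g y) by (intros x y H; unfold g; apply Hm in H; lra).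
    assert (HKg : Kp g).
    { intros x y. unfold g. replace (- f x - - f y) with (- (f x - f y)) by ring.
      rewrite sin_neg. rewrite <- (HK x y). split; intros; lra. }
    assert (Himg' : forall y, (exists x, oint a b x /\ g x = y) <-> oint (- b') (- a') y).
    { intros y. unfold g, oint. split.
      - intros [x [Hx Ex]]. assert (oint a' b' (f x)) by (apply Himg; exists x; auto).
        unfold oint in H. lra.
      - intros Hy. destruct (Himg (- y)) as [_ H]. destruct H as [x [Hx Ex]]. unfold oint; lra.
        exists x; split; auto. lra. }
    destruct (img_inc g a b (- b') (- a') Hcg Hmg Hab ltac:(lra) Himg') as [E1 E2].
    rewrite (W_preserve g a b Hcg Hmg HKg Hab).
    rewrite (W_len (g a)), (W_len a'). f_equal. unfold g in *. lra.
Qed.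

Lemma W_conv L L' : 0 < L -> 0 < L' -> W 0 L = W 0 L' ->
  L = L' \/ exists n, INR n * PI < L < INR (S n) * PI /\ INR n * PI < L' < INR (S n) * PI.
Proof.
  intros HL HL' HW. pose proof PI_RGT_0 as HPI. unfold W in HW. rewrite !Rminus_0_r in HW.
  destruct (base_Int_part (L / PI)) as [B1 B2].
  destruct (base_Int_part (L' / PI)) as [B1' B2'].
  set (x := L / PI) in *. set (x' := L' / PI) in *.
  assert (Ex : L = x * PI) by (unfold x; field; lra).
  assert (Ex' : L' = x' * PI) by (unfold x'; field; lra).
  set (k := Int_part x) in *. set (k' := Int_part x') in *.
  clearbody x x' k k'.
  revert HW; destruct (Req_EM_T x (IZR k)) as [E|E]; destruct (Req_EM_T x' (IZR k')) as [E'|E']; intros HW.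
  - left. subst. rewrite HW. auto.
  - exfalso. assert (IZR (2 * k) = IZR (2 * k' + 1)).
    { rewrite mult_IZR, plus_IZR, mult_IZR. lra. }
    apply eq_IZR in H. lia.
  - exfalso. assert (IZR (2 * k') = IZR (2 * k + 1)).
    { rewrite mult_IZR, plus_IZR, mult_IZR. lra. }
    apply eq_IZR in H. lia.
  - right. assert (k = k') by (apply eq_IZR; lra). subst k'.
    assert (0 < x) by (apply (Rmult_lt_reg_r PI); lra).
    assert (Hk : (0 <= k)%Z) by (assert (-1 < IZR k) by lra; apply lt_IZR in H0; lia).
    exists (Z.to_nat k).
    assert (En : INR (Z.to_nat k) = IZR k) by (rewrite INR_IZR_INZ, Z2Nat.id; auto).
    rewrite S_INR, En. subst L L'.
    assert (IZR k < x) by (destruct B1 as [B|B]; [auto|exfalso; apply E; symmetry; auto]).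
    assert (IZR k < x') by (destruct B1' as [B|B]; [auto|exfalso; apply E'; symmetry; auto]).
    split; split; nra.
Qed.

Lemma sin_shift n z : sin (z + INR n * PI) = (-1) ^ n * sin z.
Proof.
  induction n as [|n IH].
  - simpl. replace (z + 0 * PI) with z by ring. ring.
  - rewrite S_INR. replace (z + (INR n + 1) * PI) with ((z + INR n * PI) + PI) by ring.
    rewrite neg_sin, IH. simpl. ring.
Qed.

Lemma m1sq n : (-1) ^ n * (-1) ^ n = 1.
Proof. induction n; simpl; [ring|]. transitivity ((-1)^n * (-1)^n); [ring|auto]. Qed.

Lemma sin_sign n y y' : INR n * PI < y < INR (S n) * PI -> INR n * PI < y' < INR (S n) * PI ->
  0 < sin y * sin y'.
Proof.
  intros H1 H2. rewrite S_INR in H1, H2.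
  replace y with ((y - INR n * PI) + INR n * PI) by ring.
  replace y' with ((y' - INR n * PI) + INR n * PI) by ring.
  rewrite !sin_shift.
  assert (0 < sin (y - INR n * PI)) by (apply sin_gt_0; lra).
  assert (0 < sin (y' - INR n * PI)) by (apply sin_gt_0; lra).
  replace ((-1) ^ n * sin (y - INR n * PI) * ((-1) ^ n * sin (y' - INR n * PI)))
    with ((-1) ^ n * (-1) ^ n * (sin (y - INR n * PI) * sin (y' - INR n * PI))) by ring.
  rewrite m1sq. nra.
Qed.

Lemma h1 t : h 1 t = t.
Proof. unfold h, hN. replace (1 - 1) with 0 by ring. rewrite !Rmult_0_l. unfold Rdiv. rewrite Rmult_0_l, atan_0. ring. Qed.

Lemma mu_exists L L' : 0 < L -> 0 < L' -> W 0 L = W 0 L' ->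
  exists mu, 0 < mu /\ h mu (L / 2) = L' / 2.
Proof.
  intros HL HL' HW. pose proof PI_RGT_0 as HPI.
  destruct (W_conv L L' HL HL' HW) as [E|[n [H1 H2]]].
  - exists 1. split; [lra|]. rewrite h1. subst; auto.
  - set (s := L / 2). set (s' := L' / 2).
    assert (L = 2 * s) by (unfold s; field). assert (L' = 2 * s') by (unfold s'; field).
    pose proof (sin_sign n L L' H1 H2) as P.
    rewrite H, H0, !sin_2a in P.
    assert (Hc : cos s <> 0) by (intro Z; rewrite Z in P; nra).
    assert (Hs : sin s' <> 0) by (intro Z; rewrite Z in P; nra).
    assert (Hm : 0 < sin s * cos s' / (cos s * sin s')).
    { replace (sin s * cos s' / (cos s * sin s')) with
        ((sin s * cos s * (sin s' * cos s')) / ((cos s * sin s') * (cos s * sin s'))) by (field; auto).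
      apply Rdiv_lt_0_compat; [nra|]. assert (cos s * sin s' <> 0) by (apply Rmult_integral_contrapositive; auto).
      nra. }
    exists (sin s * cos s' / (cos s * sin s')). split; auto.
    apply h_hit; auto. rewrite S_INR in H1, H2. lra.
Qed.

Lemma backward a b a' b' : a < b -> a' < b' -> W a b = W a' b' ->
  exists f : R -> R, in_SL2tilde f /\
    (forall y, (exists x, oint a b x /\ f x = y) <-> oint a' b' y).
Proof.
  intros Hab Hab' HW. rewrite (W_len a b), (W_len a' b') in HW.
  destruct (mu_exists (b - a) (b' - a') ltac:(lra) ltac:(lra) HW) as [mu [Hm Hh]].
  set (s := (b - a) / 2) in *. set (s' := (b' - a') / 2) in *.
  set (f := F (- (a + s)) (a' + s') mu).
  assert (Hsl : in_SL2tilde f) by (apply F_SL; auto).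
  exists f. split; auto.
  assert (Fa : f a = a').
  { unfold f, F. replace (a + - (a + s)) with (- s) by ring. rewrite h_odd, Hh. unfold s'. field. }
  assert (Fb : f b = b').
  { unfold f, F. replace (b + - (a + s)) with s by (unfold s; field). rewrite Hh. unfold s'. field. }
  destruct Hsl as [Hd _].
  assert (Hc : continuity f) by (destruct Hd as [g [_ [_ [Hs _]]]]; apply smooth_cont; auto).
  assert (Hi := diffeo_inj f Hd).
  assert (Hm' : forall x y, x < y -> f x < f y).
  { destruct (mono f Hc Hi) as [M|M]; auto. exfalso. apply M in Hab. lra. }
  intros y. unfold oint. split.
  - intros [x [Hx Ex]]. subst y. rewrite <- Fa, <- Fb. split; apply Hm'; lra.
  - intros Hy. destruct (IVTg f a b y Hc) as [x [Hx Ex]]; [lra|rewrite Fa, Fb; nra|].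
    exists x. split; auto.
    split.
    + destruct (Rle_lt_or_eq_dec a x) as [|E]; [lra|auto|subst x; lra].
    + destruct (Rle_lt_or_eq_dec x b) as [|E]; [lra|auto|subst x; lra].
Qed.

Theorem mainTheorem6 :
  forall a b a' b' : R, a < b -> a' < b' ->
    ((exists f : R -> R, in_SL2tilde f /\
        (forall y, (exists x, oint a b x /\ f x = y) <-> oint a' b' y))
     <-> W a b = W a' b').
Proof.
  intros a b a' b' Hab Hab'. split.
  - intros [f [Hf Himg]]. apply (forward a b a' b' f); auto.
  - apply backward; auto.
Qed.
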